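(* Let $n,a,t,k\in\mathbb N$ satisfy $t<a<n$. Assume $\mathcal F_1,\dots,\mathcal F_k\subseteq\binom{[n]}{a}$ satisfy $$|\mathcal F_i|\ge 2^{k-2}\cdot\sqrt{32a(n-a)}\cdot\exp\left(-\frac{(a-t-1)^2}{40a}\right)\cdot\binom{n}{a}+2^{k-2}$$ for all $i\in\{1,\dots,k\}$. Then there are $F_1\in\mathcal F_1,\dots,F_k\in\mathcal F_k$ such that $|F_1\cap F_i|\ge t+1$ for all $i\in\{2,\dots,k\}$.
   Context: $[n]=\{1,\dots,n\}$ and $\binom{[n]}{a}$ denotes the family of all $a$-element subsets of $[n]$. *)

(* Defs.v *)
From mathcomp Require Import all_boot.
From Stdlib Require Import Reals.

(* Main.v *)
Require Import Defs.
From mathcomp Require Import all_boot.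
From Stdlib Require Import Reals.
From Stdlib Require Import Lra.

Lemma c_pos_std (k : nat) : (0 < 2 ^ k / 4)%R.
Proof. apply Rdiv_lt_0_compat; [apply pow_lt; lra | lra]. Qed.

Lemma four_pow_std (k : nat) : (4 * INR k <= 2 ^ k * 2 ^ k)%R.
Proof.
destruct k as [|k]; [simpl; lra|].
induction k as [|k IHk]; [simpl; lra|].
rewrite S_INR.
change (2 ^ S (S k))%R with (2 * 2 ^ S k)%R.
assert (h : (1 <= INR (S k))%R) by (rewrite S_INR; pose proof (pos_INR k); lra).
set P := (2 ^ S k)%R in IHk |- *.
nra.
Qed.

Lemma c_sq_std (k : nat) : (INR k <= (2 ^ S k / 4) * (2 ^ S k / 4))%R.
Proof.
pose proof (four_pow_std k) as h.
change (2 ^ S k)%R with (2 * 2 ^ k)%R.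
replace ((2 * 2 ^ k / 4) * (2 * 2 ^ k / 4))%R with ((2 ^ k * 2 ^ k) / 4)%R by field.
lra.
Qed.

Lemma sqrt_ge1_std (x : R) : (1 <= x)%R -> (1 <= sqrt x)%R.
Proof. intro h; rewrite <- sqrt_1; apply sqrt_le_1_alt; exact h. Qed.

Lemma prod_ge1_std (a m : nat) : (1 <= a)%coq_nat -> (1 <= m)%coq_nat -> (1 <= 32 * INR a * INR m)%R.
Proof.
intros ha hm.
apply le_INR in ha; apply le_INR in hm; simpl in ha, hm.
nra.
Qed.

From mathcomp Require Import all_order all_algebra fingroup perm.
From mathcomp Require Import Rstruct.
From mathcomp Require Import ring lra.
Import Order.TTheory GRing.Theory Num.Theory.
Set Implicit Arguments. Unset Strict Implicit. Unset Printing Implicit Defensive.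
Local Open Scope ring_scope.

Definition E (x : R) : R := exp x.
Arguments E x%_ring_scope.
Lemma exp_gt0' (x : R) : 0 < E x.
Proof. by apply/RltP; apply: exp_pos. Qed.
Lemma exp_ge1x (x : R) : 1 + x <= E x.
Proof. by apply/RleP; apply: exp_ineq1_le. Qed.
Lemma exp_le' (x y : R) : x <= y -> E x <= E y.
Proof.
rewrite le_eqVlt => /orP[/eqP -> //| /RltP h].
by apply/ltW/RltP; apply: exp_increasing.
Qed.
Lemma expD' (x y : R) : E (x + y) = E x * E y.
Proof. by rewrite /E expRD. Qed.
Lemma exp0' : E 0 = 1.
Proof. exact: exp_0. Qed.
Lemma exp_bound (v : R) : v <= 1/2 -> E v <= 1 + v + 2 * v ^+ 2.
Proof.
move=> hv.
have h1 : 1 - v <= E (- v) by have := exp_ge1x (- v).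
have h2 : E v * E (- v) = 1 by rewrite -expD' subrr exp0'.
have h3 := exp_gt0' v.
have h4 : E v * (1 - v) <= 1 by rewrite -h2; nra.
have h5 : 1 <= (1 + v + 2 * v ^+ 2) * (1 - v).
  have : 0 <= v ^+ 2 * (1 - 2 * v) by apply: mulr_ge0; [apply: sqr_ge0| lra].
  move=> h; nra.
nra.
Qed.

Lemma step_bound (lam d : R) : 0 <= lam -> lam <= 1/2 -> -1 <= d -> d <= 1 ->
  E (lam * d) <= 1 + lam * d + 2 * lam ^+ 2.
Proof.
move=> l0 l1 d1 d2.
have p1 : 0 <= lam * (1 - d) by apply: mulr_ge0 => //; lra.
have p2 : 0 <= (1 - d) * (1 + d) by apply: mulr_ge0; lra.
have p3 : 0 <= lam ^+ 2 * ((1 - d) * (1 + d)) by apply: mulr_ge0 => //; apply: sqr_ge0.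
have p4 : lam * d <= 1/2.
  have e : lam - lam * d = lam * (1 - d) by ring.
  lra.
apply: le_trans (exp_bound p4) _.
have : (lam * d) ^+ 2 <= lam ^+ 2.
  have e : lam ^+ 2 - (lam * d) ^+ 2 = lam ^+ 2 * ((1 - d) * (1 + d)) by ring.
  by rewrite -subr_ge0 e.
lra.
Qed.

Section Conc.
Variable T : finType.
Definition sl (U : {set T}) (m : nat) : {set {set T}} := [set S : {set T} | S \subset U & (#|S| == m)].
Lemma card_sl (U : {set T}) m : #|sl U m| = 'C(#|U|, m).
Proof. exact: cards_draws. Qed.

Lemma double_count (U : {set T}) (m : nat) (h : {set T} -> R) :
  \sum_(x in U) \sum_(S in sl (U :\ x) m) h (x |: S) = m.+1%:R * \sum_(S in sl U m.+1) h S.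
Proof.
transitivity (\sum_(x in U) \sum_(S : {set T} | (S \in sl U m.+1) && (x \in S)) h S).
  apply: eq_bigr => x xU.
  rewrite [RHS](reindex_onto (fun S : {set T} => x |: S) (fun S : {set T} => S :\ x)) /=; last first.
    by move=> S /andP[_ xS]; rewrite setD1K.
  symmetry; apply: eq_bigl => S; rewrite !inE.
  case xS: (x \in S).
    rewrite subsetD1 xS !andbF.
    rewrite [(_ :\ x == S)](_ : _ = false) ?andbF //.
    apply/negbTE; apply/negP => /eqP e.
    by move: xS; rewrite -e !inE eqxx.
  rewrite setU1K ?xS // eqxx subUset sub1set xU subsetD1 xS cardsU1 xS /=.
  by rewrite eqxx add1n eqSS !andbT.
rewrite (exchange_big_dep (fun S : {set T} => S \in sl U m.+1)) /=; last by move=> x S _ /andP[].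
rewrite big_distrr /=; apply: eq_bigr => S.
rewrite inE => /andP[sU /eqP cS].
rewrite sumr_const -cS mulr_natl; congr (_ *+ _).
rewrite sU eqxx /=; apply: eq_card => x; rewrite unfold_in /=.
case xS: (x \in S); last by rewrite andbF.
by rewrite (subsetP sU).
Qed.

Definition Lip (f : {set T} -> R) := forall S S' : {set T},
  (#|S :\: S'| <= 1)%nat -> (#|S' :\: S| <= 1)%nat -> `|f S - f S'| <= 1.

Lemma tperm_inv (x y : T) (W : {set T}) (z : T) :
  (z \in tperm x y @: W) = (tperm x y z \in W).
Proof.
apply/imsetP/idP.
  by case=> w wW ->; rewrite tpermK.
by move=> h; exists (tperm x y z) => //; rewrite tpermK.
Qed.

Lemma swap_close (W : {set T}) (x : T) (y : T) : x \in W ->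
  (#|W :\: tperm x y @: W| <= 1)%nat /\ (#|tperm x y @: W :\: W| <= 1)%nat.
Proof.
move=> xW; split.
  rewrite -(cards1 x); apply: subset_leq_card; apply/subsetP => z.
  rewrite !inE tperm_inv => /andP[zn zW]; apply/eqP.
  move: zn; case: tpermP => //.
    by move=> ->; rewrite xW.
  by move=> _ _; rewrite zW.
rewrite -(cards1 y); apply: subset_leq_card; apply/subsetP => z.
rewrite !inE tperm_inv => /andP[zn zW]; apply/eqP.
move: zW; case: tpermP => //.
  by move=> zx _; rewrite zx xW in zn.
by move=> _ _ h; rewrite h in zn.
Qed.

Lemma sl_swap (U : {set T}) m (x y : T) (F : {set T} -> R) : x \in U -> y \in U ->
  \sum_(S in sl (U :\ y) m) F S = \sum_(S in sl (U :\ x) m) F (tperm x y @: S).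
Proof.
move=> xU yU.
rewrite (reindex (fun S : {set T} => tperm x y @: S)) /=; last first.
  exists (fun S : {set T} => tperm x y @: S) => S _;
  by apply/setP => z; rewrite !tperm_inv tpermK.
apply: eq_bigl => S; rewrite !inE card_imset; last exact: perm_inj.
congr (_ && _).
rewrite sub_imset_pre (_ : tperm x y @^-1: (U :\ y) = U :\ x) //.
apply/setP => z; rewrite !inE.
case: (tpermP x y z).
- by move=> ->; rewrite eqxx xU yU; case: eqP.
- by move=> ->; rewrite xU yU eq_sym.
- by move=> /eqP/negbTE -> /eqP/negbTE ->.
Qed.

Lemma Lip_U1 (f : {set T} -> R) x : Lip f -> Lip (fun S => f (x |: S)).
Proof.
move=> Lf S S' h1 h2; apply: Lf.
  apply: leq_trans h1; apply: subset_leq_card; apply/subsetP => z.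
  by rewrite !inE negb_or => /andP[/andP[/negbTE zx ->]]; rewrite zx.
apply: leq_trans h2; apply: subset_leq_card; apply/subsetP => z.
by rewrite !inE negb_or => /andP[/andP[/negbTE zx ->]]; rewrite zx.
Qed.

Lemma sl0 (U : {set T}) : sl U 0 = [set set0].
Proof.
apply/setP => S; rewrite !inE cards_eq0.
by case: eqP => [->|]; rewrite ?sub0set ?andbF.
Qed.

Lemma cardx (U : {set T}) m x : x \in U -> #|sl (U :\ x) m| = 'C(#|U|.-1, m).
Proof. by move=> xU; rewrite card_sl (cardsD1 x U) xU. Qed.

Lemma g_close (U : {set T}) m (f : {set T} -> R) x y : Lip f -> x \in U -> y \in U ->
  `|\sum_(S in sl (U :\ x) m) f (x |: S) - \sum_(S in sl (U :\ y) m) f (y |: S)|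
   <= 'C(#|U|.-1, m)%:R.
Proof.
move=> Lf xU yU.
rewrite (sl_swap m (fun S => f (y |: S)) xU yU) -sumrB.
apply: le_trans (ler_norm_sum _ _ _) _.
rewrite -(cardx m xU) -sumr_const; apply: ler_sum => S _.
have -> : y |: [set tperm x y z | z in S] = tperm x y @: (x |: S) by rewrite imsetU1 tpermL.
have [h1 h2] := @swap_close (x |: S) x y (setU11 x S).
exact: Lf.
Qed.

Lemma conc (m : nat) : forall (U : {set T}) (f : {set T} -> R) (lam : R),
  (m <= #|U|)%nat -> Lip f -> 0 <= lam -> lam <= 1/2 ->
  \sum_(S in sl U m) E (lam * (f S - (\sum_(S' in sl U m) f S') / #|sl U m|%:R))
   <= #|sl U m|%:R * E (2 * lam ^+ 2 * m%:R).
Proof.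
elim: m => [|m IH] U f lam hm Lf l0 l1.
  rewrite sl0 big_set1 cards1 big_set1 divr1 subrr !mulr0 exp0' mulr1.
  by rewrite lexx.
set u := #|U|.
set N' : R := 'C(u.-1, m)%:R.
set g := fun x => (\sum_(S in sl (U :\ x) m) f (x |: S)) / N'.
have hm' : (m <= u.-1)%nat by rewrite -ltnS prednK // (leq_trans _ hm).
have N'pos : 0 < N' by rewrite ltr0n bin_gt0.
have upos : 0 < u%:R :> R by rewrite ltr0n (leq_trans _ hm).
have Npos : 0 < #|sl U m.+1|%:R :> R by rewrite ltr0n card_sl bin_gt0.
have e1 : m.+1%:R * #|sl U m.+1|%:R = u%:R * N'.
  have := double_count U m (fun _ => 1).
  rewrite sumr_const => <-.
  rewrite (eq_bigr (fun _ => N')); last first.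
    by move=> x xU; rewrite sumr_const cardx.
  by rewrite sumr_const mulr_natl.
have e2 : m.+1%:R * \sum_(S in sl U m.+1) f S = N' * \sum_(x in U) g x.
  rewrite -double_count big_distrr; apply: eq_bigr => x _.
  by rewrite /g -[RHS]/(N' * _) mulrC divfK // gt_eqF.
set mu := (\sum_(S' in sl U m.+1) f S') / #|sl U m.+1|%:R.
have emu : mu = (\sum_(x in U) g x) / u%:R.
  rewrite /mu.
  have -> : \sum_(S' in sl U m.+1) f S' = N' * (\sum_(x in U) g x) / m.+1%:R.
    by rewrite -e2 mulrC mulKf // pnatr_eq0.
  have -> : #|sl U m.+1|%:R = u%:R * N' / m.+1%:R :> R.
    by rewrite -e1 mulrC mulKf // pnatr_eq0.
  field; apply/and3P; split; rewrite gt_eqF //; have := ler0n R m; lra.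
have gc : forall x y, x \in U -> y \in U -> `|g x - g y| <= 1.
  move=> x y xU yU; have Ni : 0 < N'^-1 by rewrite invr_gt0.
  rewrite /g -mulrBl normrM (gtr0_norm Ni) ler_pdivrMr // mul1r.
  exact: g_close.
have gm : forall x, x \in U -> `|g x - mu| <= 1.
  move=> x xU; rewrite emu.
  have -> : g x - (\sum_(y in U) g y) / u%:R = (\sum_(y in U) (g x - g y)) / u%:R.
    rewrite sumrB sumr_const -mulr_natr; field; rewrite gt_eqF //.
  have ui : 0 < (u%:R : R)^-1 by rewrite invr_gt0.
  rewrite normrM (gtr0_norm ui) ler_pdivrMr // mul1r.
  apply: le_trans (ler_norm_sum _ _ _) _.
  have -> : u%:R = \sum_(y in U) (1 : R) by rewrite sumr_const.
  by apply: ler_sum => y yU; apply: gc.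
have sg : \sum_(x in U) (g x - mu) = 0.
  rewrite sumrB sumr_const emu -mulr_natr; field; rewrite gt_eqF //.
have kb : \sum_(x in U) E (lam * (g x - mu)) <= u%:R * E (2 * lam ^+ 2).
  apply: le_trans (_ : \sum_(x in U) (1 + lam * (g x - mu) + 2 * lam ^+ 2) <= _).
    apply: ler_sum => x xU; have := gm x xU; rewrite ler_norml => /andP[d1 d2].
    exact: (step_bound l0 l1 d1 d2).
  have -> : \sum_(x in U) (1 + lam * (g x - mu) + 2 * lam ^+ 2) = u%:R * (1 + 2 * lam ^+ 2).
    rewrite big_split big_split /= -mulr_sumr sg mulr0 addr0 !sumr_const.
    by rewrite /u mulrDr mulr1 !mulr_natl.
  by apply: (ler_wpM2l (ltW upos)); exact: exp_ge1x.
rewrite -(@ler_pM2l _ m.+1%:R) ?ltr0Sn //.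
rewrite -double_count.
apply: le_trans (_ : \sum_(x in U) E (lam * (g x - mu)) * (N' * E (2 * lam ^+ 2 * m%:R)) <= _).
  apply: ler_sum => x xU.
  have -> : \sum_(S in sl (U :\ x) m) E (lam * (f (x |: S) - mu)) =
     E (lam * (g x - mu)) * \sum_(S in sl (U :\ x) m) E (lam * (f (x |: S) - g x)).
    rewrite big_distrr; apply: eq_bigr => S _.
    have -> : E (lam * (f (x |: S) - mu)) = E (lam * (g x - mu)) * E (lam * (f (x |: S) - g x)).
      by rewrite -expD'; congr E; ring.
    by [].
  apply: (ler_wpM2l (ltW (exp_gt0' _))).
  have hmx : (m <= #|U :\ x|)%nat by move: hm; rewrite (cardsD1 x U) xU.
  have := IH (U :\ x) (fun S => f (x |: S)) lam hmx (Lip_U1 x Lf) l0 l1.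
  by rewrite cardx.
rewrite -big_distrl /=.
have -> : E (2 * lam ^+ 2 * m.+1%:R) = E (2 * lam ^+ 2) * E (2 * lam ^+ 2 * m%:R).
  by rewrite -expD' -addn1 natrD; congr E; ring.
rewrite [X in _ <= X]mulrA e1.
rewrite [X in _ <= X](_ : _ = u%:R * E (2 * lam ^+ 2) * (N' * E (2 * lam ^+ 2 * m%:R))); last by ring.
apply: (ler_wpM2r (mulr_ge0 (ltW N'pos) (ltW (exp_gt0' _))) kb).
Qed.

End Conc.

Lemma sum_sub (I : finType) (B C : {set I}) (F : I -> R) :
  B \subset C -> (forall i, 0 <= F i) -> \sum_(i in B) F i <= \sum_(i in C) F i.
Proof.
move=> BC F0; rewrite [X in _ <= X](big_setID B) /= (setIidPr BC) lerDl.
by apply: sumr_ge0.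
Qed.

Lemma card_setI_le (T : finType) (S S' P : {set T}) :
  (#|S :&: P| <= #|S' :&: P| + #|S :\: S'|)%nat.
Proof.
apply: leq_trans (_ : (#|(S' :&: P) :|: (S :\: S')| <= _)%nat); last first.
  by rewrite cardsU leq_subr.
apply: subset_leq_card; apply/subsetP => z; rewrite !inE.
by case/andP => -> ->; case: (z \in S').
Qed.

Section Cross.
Variable T : finType.
Variables (a t : nat) (A B : {set {set T}}).
Hypothesis ta : (t < a)%nat.
Hypothesis HA : forall S, S \in A -> #|S| = a.
Hypothesis HB : forall S, S \in B -> #|S| = a.
Hypothesis HAB : forall P Q, P \in A -> Q \in B -> (#|P :&: Q| <= t)%nat.

Definition hA (S : {set T}) : nat := \max_(P in A) #|S :&: P|.

Lemma hA_le S S' : (hA S <= hA S' + #|S :\: S'|)%nat.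
Proof.
apply/bigmax_leqP => P PA.
apply: leq_trans (card_setI_le S S' P) _.
by rewrite leq_add2r (leq_bigmax_cond _ PA).
Qed.

Lemma Lip_hA : Lip (fun S => (hA S)%:R : R).
Proof.
move=> S S' h1 h2.
have e1 : (hA S <= hA S' + 1)%nat by apply: leq_trans (hA_le S S') _; rewrite leq_add2l.
have e2 : (hA S' <= hA S + 1)%nat by apply: leq_trans (hA_le S' S) _; rewrite leq_add2l.
have r1 : (hA S)%:R <= (hA S')%:R + 1 :> R by rewrite natr1 ler_nat -addn1.
have r2 : (hA S')%:R <= (hA S)%:R + 1 :> R by rewrite natr1 ler_nat -addn1.
rewrite ler_norml; apply/andP; split; lra.
Qed.

Lemma Lip_opp (f : {set T} -> R) : Lip f -> Lip (fun S => - f S).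
Proof. by move=> Lf S S' h1 h2; rewrite -opprD normrN; apply: Lf. Qed.

Lemma cross : #|A|%:R * #|B|%:R <= 'C(#|T|, a)%:R ^+ 2 * E (- ((a - t)%:R ^+ 2 / (16 * a%:R))) :> R.
Proof.
case: (set_0Vmem A) => [->|[P0 P0A]].
  rewrite cards0 mul0r; apply: mulr_ge0; [exact: sqr_ge0 | exact/ltW/exp_gt0'].
set U := [set: T].
have aT : (a <= #|U|)%nat by rewrite -(HA P0A) cardsT max_card.
have eN : 'C(#|T|, a) = #|sl U a| by rewrite card_sl cardsT.
rewrite eN.
set N := #|sl U a|%:R.
set f := fun S => (hA S)%:R : R.
set mu := (\sum_(S' in sl U a) f S') / N.
set s := (a - t)%:R : R.
set lam := s / (8 * a%:R).
have a0 : 0 < a%:R :> R by rewrite ltr0n (leq_ltn_trans _ ta).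
have s0 : 0 < s by rewrite ltr0n subn_gt0.
have es : s = a%:R - t%:R by rewrite /s natrB // ltnW.
have t0 : 0 <= t%:R :> R by apply: ler0n.
have l0 : 0 <= lam by apply: divr_ge0; [exact: ltW | lra].
have l1 : lam <= 1/2.
  rewrite /lam ler_pdivrMr; last by lra.
  lra.
have C1 := @conc T a U f lam aT Lip_hA l0 l1.
have C2 := @conc T a U (fun S => - f S) lam aT (Lip_opp Lip_hA) l0 l1.
rewrite -/N -/mu in C1.
rewrite -/N sumrN mulNr -/mu in C2.
set K := E (2 * lam ^+ 2 * a%:R) in C1 C2.
have Asl : A \subset sl U a.
  by apply/subsetP => S SA; rewrite inE subsetT HA // eqxx.
have Bsl : B \subset sl U a.
  by apply/subsetP => S SB; rewrite inE subsetT HB // eqxx.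
have LA : #|A|%:R * E (lam * (a%:R - mu)) <= N * K.
  apply: le_trans C1.
  apply: le_trans (_ : \sum_(S in A) E (lam * (f S - mu)) <= _); last first.
    by apply: (sum_sub Asl) => S; exact/ltW/exp_gt0'.
  rewrite mulr_natl -sumr_const; apply: ler_sum => S SA; apply: exp_le'.
  apply: (ler_wpM2l l0); rewrite lerD2r /f ler_nat -{1}(HA SA) -{1}(setIid S).
  exact: leq_bigmax_cond.
have LB : #|B|%:R * E (lam * (mu - t%:R)) <= N * K.
  apply: le_trans C2.
  apply: le_trans (_ : \sum_(S in B) E (lam * (- f S - - mu)) <= _); last first.
    by apply: (sum_sub Bsl) => S; exact/ltW/exp_gt0'.
  rewrite mulr_natl -sumr_const; apply: ler_sum => S SB; apply: exp_le'.
  apply: (ler_wpM2l l0).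
  have : f S <= t%:R.
    rewrite /f ler_nat; apply/bigmax_leqP => P PA; rewrite setIC; exact: HAB.
  lra.
have eE : E (lam * (a%:R - mu)) * E (lam * (mu - t%:R)) = E (lam * s).
  by rewrite -expD' es; congr E; ring.
have eK : K * K = E (- (s ^+ 2 / (16 * a%:R))) * E (lam * s).
  rewrite /K -!expD'; congr E; rewrite /lam; field; rewrite gt_eqF //.
have Ep := exp_gt0' (lam * s).
suff H : #|A|%:R * #|B|%:R * E (lam * s) <= N ^+ 2 * E (- (s ^+ 2 / (16 * a%:R))) * E (lam * s).
  by rewrite ler_pM2r in H.
have NK0 : 0 <= N * K by apply: mulr_ge0; [exact: ler0n | exact/ltW/exp_gt0'].
have Ea0 : 0 <= E (lam * (a%:R - mu)) by exact/ltW/exp_gt0'.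
have Eb0 : 0 <= E (lam * (mu - t%:R)) by exact/ltW/exp_gt0'.
have cA : 0 <= #|A|%:R :> R by apply: ler0n.
have cB : 0 <= #|B|%:R :> R by apply: ler0n.
have -> : #|A|%:R * #|B|%:R * E (lam * s) =
   (#|A|%:R * E (lam * (a%:R - mu))) * (#|B|%:R * E (lam * (mu - t%:R))).
  by rewrite -eE; ring.
have -> : N ^+ 2 * E (- (s ^+ 2 / (16 * a%:R))) * E (lam * s) = (N * K) * (N * K).
  by rewrite -mulrA -eK; ring.
apply: ler_pM => //; apply: mulr_ge0 => //.
Qed.
End Cross.

Lemma cover_count (I J : finType) (A : {set I}) (B : J -> {set I}) (p : pred J) :
  (forall x, x \in A -> exists2 j, p j & x \in B j) -> (#|A| <= \sum_(j | p j) #|B j|)%nat.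
Proof.
move=> h; rewrite -sum1_card.
apply: leq_trans (_ : (\sum_(x in A) \sum_(j | p j) (x \in B j) <= _)%nat).
  apply: leq_sum => x xA; have [j pj xB] := h x xA.
  by rewrite (bigD1 j) //= xB.
rewrite exchange_big /=; apply: leq_sum => j _.
rewrite -sum1_card big_mkcond [X in (_ <= X)%nat]big_mkcond /=.
apply: leq_sum => x _.
by case: (x \in A); case: (x \in B j).
Qed.

Lemma card_pos_ord k : #|[pred i : 'I_k.+1 | (1 <= i)%nat]| = k.
Proof.
transitivity #|predC1 (ord0 : 'I_k.+1)|; last by rewrite cardC1 card_ord.
apply: eq_card => i; rewrite !inE /=.
by rewrite lt0n; congr negb; apply/eqP/eqP => [h|->] //; apply: val_inj.
Qed.

Definition lhsE (a t : nat) : R := E (- ((a - t)%:R ^+ 2 / (32 * a%:R))).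

Lemma main_aux (n a t k : nat) (Ht : (t < a)%nat) (Ha : (a < n)%nat)
  (F : 'I_k.+1 -> {set {set 'I_n}})
  (Hsub : forall i : 'I_k.+1, forall A, A \in F i -> #|A| = a)
  (c Sq Ex : R) (cpos : 0 < c) (ck : k%:R <= c * c) (Sq1 : 1 <= Sq) (Exb : lhsE a t <= Ex)
  (Hs : forall i, c * Sq * Ex * 'C(n, a)%:R + c <= #|F i|%:R) :
  exists G : 'I_k.+1 -> {set 'I_n},
    (forall i, G i \in F i) /\
    (forall i j : 'I_k.+1, nat_of_ord j = 0%nat -> (1 <= nat_of_ord i)%nat ->
        (t.+1 <= #|G j :&: G i|)%nat).
Proof.
set C := 'C(n, a)%:R : R.
set XC := Sq * Ex * C.
have Ex0 : 0 < Ex by apply: lt_le_trans (exp_gt0' _) Exb.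
have C0 : 0 <= C by apply: ler0n.
have XC0 : 0 <= XC by apply: mulr_ge0 => //; apply: mulr_ge0; [lra | exact: ltW].
set i0 : 'I_k.+1 := ord0.
set Bad := fun i => [set P in F i0 | [forall Q in F i, (#|P :&: Q| <= t)%nat]].
have good : exists2 P, P \in F i0 & forall i : 'I_k.+1, (1 <= i)%nat ->
    exists2 Q, Q \in F i & (t < #|P :&: Q|)%nat.
  case: (boolP [exists P in F i0, [forall i : 'I_k.+1,
     (1 <= i)%nat ==> [exists Q in F i, (t < #|P :&: Q|)%nat]]]).
    case/existsP => P /andP[PF /forallP hP]; exists P => // i i1.
    by have := hP i; rewrite i1 /= => /existsP[Q /andP[QF tQ]]; exists Q.
  move/existsPn => hn.
  have hall : forall P, P \in F i0 -> exists2 i : 'I_k.+1, (1 <= i)%nat & P \in Bad i.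
    move=> P PF; have := hn P; rewrite PF /= negb_forall => /existsP[i].
    rewrite negb_imply => /andP[i1 /existsPn hq]; exists i => //.
    rewrite inE PF /=; apply/forallP => Q; apply/implyP => QF.
    by have := hq Q; rewrite QF /= -leqNgt.
  have hS := cover_count hall.
  exfalso.
  set S := (\sum_(i : 'I_k.+1 | (1 <= i)%nat) #|Bad i|)%nat in hS.
  set M := c * XC + c.
  have HM : forall i, M <= #|F i|%:R.
    by move=> i; apply: le_trans (Hs i); rewrite /M /XC le_eqVlt; apply/orP; left; apply/eqP; ring.
  have M0 : 0 < M by rewrite /M; have := mulr_ge0 (ltW cpos) XC0; lra.
  have E0b : C ^+ 2 * E (- ((a - t)%:R ^+ 2 / (16 * a%:R))) <= XC ^+ 2.
    have e : C ^+ 2 * E (- ((a - t)%:R ^+ 2 / (16 * a%:R))) = (C * lhsE a t) ^+ 2.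
      rewrite /lhsE exprMn expr2 [X in _ = _ * X]expr2 -expD'; congr (_ * E _).
      have a0 : a%:R != 0 :> R by rewrite pnatr_eq0 -lt0n (leq_ltn_trans _ Ht).
      by field.
    have hcl : 0 <= C * lhsE a t by apply: mulr_ge0 => //; exact/ltW/exp_gt0'.
    have hle : C * lhsE a t <= XC.
      rewrite /XC mulrC; apply: ler_wpM2r => //.
      apply: le_trans Exb _; rewrite -{1}[Ex]mul1r; apply: ler_wpM2r; [exact: ltW | exact: Sq1].
    by rewrite e !expr2; apply: ler_pM.
  have Hb : forall i : 'I_k.+1, (1 <= i)%nat -> #|Bad i|%:R * M <= XC ^+ 2.
    move=> i i1; apply: le_trans E0b.
    apply: le_trans (_ : #|Bad i|%:R * #|F i|%:R <= _).
      by apply: (ler_wpM2l (ler0n _ _)); exact: HM.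
    have := @cross _ a t (Bad i) (F i) Ht.
    rewrite card_ord; apply.
    - by move=> P; rewrite inE => /andP[PF _]; exact: Hsub PF.
    - by move=> Q QF; exact: Hsub QF.
    - by move=> P Q; rewrite inE => /andP[_ /forallP hP] QF; have := hP Q; rewrite QF.
  have h1 : S%:R * M <= XC ^+ 2 * k%:R.
    rewrite /S natr_sum big_distrl /=.
    apply: le_trans (_ : \sum_(i : 'I_k.+1 | (1 <= i)%nat) XC ^+ 2 <= _).
      by apply: ler_sum => i i1; exact: Hb.
    by rewrite sumr_const card_pos_ord mulr_natr.
  have h2 : XC ^+ 2 * k%:R <= XC ^+ 2 * (c * c).
    by apply: ler_wpM2l => //; apply: sqr_ge0.
  have h3 : XC ^+ 2 * (c * c) < M * M.
    rewrite /M; have := mulr_ge0 (mulr_ge0 (ltW cpos) (ltW cpos)) XC0.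
    have := mulr_gt0 cpos cpos; rewrite expr2; nra.
  have h4 : S%:R < M by rewrite -(ltr_pM2r M0); apply: le_lt_trans h1 (le_lt_trans h2 h3).
  have h5 : #|F i0|%:R <= S%:R :> R by rewrite ler_nat.
  have := HM i0; lra.
case: good => P PF hP.
exists (fun i => if (nat_of_ord i == 0)%nat then P else odflt set0 [pick Q in F i | (t < #|P :&: Q|)%nat]).
split.
  move=> i; case: eqP => [iz|/eqP ne].
    by have -> : i = i0 by apply: val_inj.
  have i1 : (0 < i)%nat by rewrite lt0n.
  have [Q QF tQ] := hP i i1.
  case: pickP => [Q' /andP[] //|none] /=.
  by have := none Q; rewrite QF tQ.
move=> i j j0 i1; rewrite j0 eqxx.
have -> : (nat_of_ord i == 0)%nat = false by rewrite eqn0Ngt i1.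
case: pickP => [Q' /andP[_ ->] //|none].
have [Q QF tQ] := hP i i1.
by have := none Q; rewrite QF tQ.
Qed.

Lemma Exb_lem (a t : nat) : (t < a)%nat ->
  lhsE a t <= exp (Rdiv (Ropp (pow (INR (a - t - 1)) 2)) (Rmult (IZR 40) (INR a))).
Proof.
move=> ta; rewrite /lhsE; apply: exp_le'.
rewrite RdivE RoppE RpowE RmultE !INRE.
have -> : IZR 40 = 40%:R :> R by rewrite IZRposE INRE.
have a0 : 0 < a%:R :> R by rewrite ltr0n (leq_ltn_trans _ ta).
have e1 : (a - t - 1)%:R = (a - t)%:R - 1 :> R by rewrite natrB // subn_gt0.
rewrite e1.
set s := (a - t)%:R : R.
have s1 : 1 <= s by rewrite /s ler1n subn_gt0.
rewrite mulNr lerN2 ler_pdivrMr; last by rewrite mulr_gt0 // ltr0n.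
have -> : s ^+ 2 / (32 * a%:R) * (40 * a%:R) = 5 / 4 * s ^+ 2.
  by field; rewrite gt_eqF.
have e : 5 / 4 * s ^+ 2 - (s - 1) ^+ 2 = 1 / 4 * s ^+ 2 + (2 * s - 1) by field.
rewrite -subr_ge0 e.
have := sqr_ge0 s; lra.
Qed.

Local Close Scope ring_scope.
Delimit Scope R_scope with R.
Unset Implicit Arguments.
Set Strict Implicit.

Theorem lemma5 (n a t k : nat) (Ht : (t < a)%N) (Ha : (a < n)%N)
  (F : 'I_k -> {set {set 'I_n}})
  (Hsub : forall i : 'I_k, forall A, A \in F i -> #|A| = a)
  (Hsize : forall i : 'I_k,
     ((2 ^ k / 4) * sqrt (32 * INR a * INR (n - a))
        * exp (- (INR (a - t - 1)) ^ 2 / (40 * INR a)) * INR 'C(n, a)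
      + (2 ^ k / 4) <= INR #|F i|)%R) :
  exists G : 'I_k -> {set 'I_n},
    (forall i, G i \in F i) /\
    (forall i j : 'I_k, nat_of_ord j = 0%N -> (1 <= nat_of_ord i)%N ->
        (t.+1 <= #|G j :&: G i|)%N).
Proof.
case: k F Hsub Hsize => [|k] F Hsub Hsize.
  by exists (fun _ => set0); split; case.
set c := (2 ^ k.+1 / 4)%R in Hsize.
set Sq := sqrt _ in Hsize.
set Ex := exp _ in Hsize.
apply: (@main_aux n a t k Ht Ha F Hsub c Sq Ex).
- by apply/RltP; apply: c_pos_std.
- by have /RleP := c_sq_std k; rewrite INRE.
- apply/RleP; apply: sqrt_ge1_std; apply: prod_ge1_std; apply/ssrnat.leP.
    exact: leq_ltn_trans _ Ht.
  by rewrite subn_gt0.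
- exact: Exb_lem.
- by move=> i; have /RleP := Hsize i; rewrite !INRE.
Qed.
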